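(* Let $\vec n\in\mathbb{R}^9$ with $\sum_i n(i)=0$ and $\sum_i n(i)^2=1$, let $r\ge 0$, and let $\rho$ be the trace-one Hermitian operator $\rho=\sum_{i=1}^9\left[4p(i)-\tfrac13\right]\Pi_i$ where $p(i)=\frac19+r\,n(i)$. Then: (i) $\rho$ is a density operator if and only if $r^2\le\frac1{18}$ and $4r^3F(\vec n)-r^2+\frac1{54}\ge0$; (ii) $\rho$ is a density operator on the boundary of the state space (having a zero eigenvalue) if and only if $r^2\le\frac1{18}$ and $4r^3F(\vec n)-r^2+\frac1{54}=0$; (iii) $\rho$ is a pure state if and only if $r^2=\frac1{18}$ and $F(\vec n)=\frac1{\sqrt2}$.
   Context: Let $\omega=e^{2\pi i/3}$, standard basis $|0\rangle,|1\rangle,|2\rangle$ of $\mathbb{C}^3$, $X|j\rangle=|j+1\bmod 3\rangle$, $Z|j\rangle=\omega^j|j\rangle$, $|\psi_0\rangle=\frac1{\sqrt2}(0,1,-1)^T$; for $m,n\in\{0,1,2\}$ and $i=3m+n+1$, $\Pi_i$ is the projector onto $X^mZ^n|\psi_0\rangle$ (the canonical Hesse SIC), so $p(i)=\frac13\operatorname{Tr}(\rho\Pi_i)$. Identify index $i=3m+n+1$ with $(m,n)\in\mathbb{Z}_3^2$; the 12 affine lines are $\{1,2,3\},\{4,5,6\},\{7,8,9\},\{1,4,7\},\{2,5,8\},\{3,6,9\},\{1,5,9\},\{2,6,7\},\{3,4,8\},\{1,6,8\},\{2,4,9\},\{3,5,7\}$, and $Q$ is the set of ordered triples $(i,j,k)$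 of pairwise distinct indices with $\{i,j,k\}$ a line. For $v\in\mathbb{R}^9$ define $F(v)=\sum_i v(i)^3-\frac12\sum_{(i,j,k)\in Q}v(i)v(j)v(k)$. *)

(* Defs.v *)
(* the complex numbers are an arbitrary numClosedFieldType C
   (e.g. algC, or the genuine complex numbers). *)
From HB Require Import structures.
From mathcomp Require Import all_boot all_order all_algebra all_field.
Set Implicit Arguments. Unset Strict Implicit. Unset Printing Implicit Defensive.
Import Order.TTheory GRing.Theory Num.Theory.
Local Open Scope ring_scope.

Definition omega (C : numClosedFieldType) : C := (-1 + 'i * sqrtC 3) / 2.

Definition adj {C : numClosedFieldType} {m n : nat} (A : 'M[C]_(m, n)) : 'M[C]_(n, m) :=
  map_mx (fun x => x^*) A^T.

(* shift X|j> = |j+1 mod 3>, clock Z|j> = omega^j |j>  (0-based indices) *)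
Definition Xop (C : numClosedFieldType) : 'M[C]_3 :=
  \matrix_(i < 3, j < 3) (if (i : nat) == (j.+1 %% 3)%N then 1 else 0).
Definition Zop (C : numClosedFieldType) : 'M[C]_3 :=
  \matrix_(i < 3, j < 3) (if i == j then omega C ^+ i else 0).

Definition psi0 (C : numClosedFieldType) : 'cV[C]_3 :=
  (sqrtC 2)^-1 *: \col_(i < 3) (if (i : nat) == 1%N then 1 else if (i : nat) == 2%N then -1 else 0).

(* SIC vector and projector for 0-based index i = 3m+n, i : 'I_9
   (the paper's index i = 3m+n+1 corresponds to our i - 1) *)
Definition sicvec (C : numClosedFieldType) (i : 'I_9) : 'cV[C]_3 :=
  Xop C ^+ (i %/ 3) *m Zop C ^+ (i %% 3) *m psi0 C.
Definition Pi (C : numClosedFieldType) (i : 'I_9) : 'M[C]_3 := sicvec C i *m adj (sicvec C i).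

(* the 12 affine lines, 0-based (paper's indices minus 1) *)
Definition lines : seq (seq nat) :=
  [:: [:: 0; 1; 2]; [:: 3; 4; 5]; [:: 6; 7; 8];
      [:: 0; 3; 6]; [:: 1; 4; 7]; [:: 2; 5; 8];
      [:: 0; 4; 8]; [:: 1; 5; 6]; [:: 2; 3; 7];
      [:: 0; 5; 7]; [:: 1; 3; 8]; [:: 2; 4; 6]]%N.

Definition inQ (i j k : 'I_9) : bool :=
  [&& i != j, j != k, i != k &
      has (fun l => [&& (i : nat) \in l, (j : nat) \in l & (k : nat) \in l]) lines].

Definition Fcub {C : numClosedFieldType} (v : 'I_9 -> C) : C :=
  \sum_i v i ^+ 3
  - 2^-1 * \sum_i \sum_j \sum_k (if inQ i j k then v i * v j * v k else 0).

Definition prob {C : numClosedFieldType} (r : C) (n : 'I_9 -> C) (i : 'I_9) : C := 9^-1 + r * n i.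
Definition rho {C : numClosedFieldType} (r : C) (n : 'I_9 -> C) : 'M[C]_3 :=
  \sum_i (4 * prob r n i - 3^-1) *: Pi C i.

Definition psd {C : numClosedFieldType} (A : 'M[C]_3) : Prop :=
  forall v : 'cV[C]_3, 0 <= (adj v *m A *m v) 0 0.
Definition density {C : numClosedFieldType} (A : 'M[C]_3) : Prop :=
  adj A = A /\ psd A /\ \tr A = 1.
Definition pure {C : numClosedFieldType} (A : 'M[C]_3) : Prop := density A /\ A *m A = A.

(* Main.v *)
Require Import Defs.
From HB Require Import structures.
From mathcomp Require Import all_boot all_order all_algebra all_field.
From mathcomp Require Import ring lra.
Import Order.TTheory GRing.Theory Num.Theory.
Local Open Scope ring_scope.

Arguments omega : simpl never.

Lemma w2 (C : numClosedFieldType) : omega C ^+ 2 + omega C + 1 = 0.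
Proof.
rewrite /omega.
have h3 : sqrtC (3 : C) ^+ 2 = 3 by rewrite sqrtCK.
have hi : ('i : C) ^+ 2 = -1 by rewrite sqrCi.
set s := sqrtC 3 in h3 *; set i := 'i in hi *.
have -> : ((-1 + i * s) / 2) ^+ 2 + (-1 + i * s) / 2 + 1 = (i^+2 * s^+2 + 3) / 4 by field.
by rewrite hi h3 mulN1r addNr mul0r.
Qed.
Lemma cw (C : numClosedFieldType) : (omega C)^* = omega C ^+ 2.
Proof.
rewrite /omega.
have h3 : sqrtC (3 : C) ^+ 2 = 3 by rewrite sqrtCK.
have hi : ('i : C) ^+ 2 = -1 by rewrite sqrCi.
have hs : (sqrtC (3:C))^* = sqrtC 3.
  by apply/CrealP; apply/ger0_real; rewrite sqrtC_ge0 ler0n.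
rewrite fmorph_div /= rmorphD /= rmorphN rmorph1 rmorphM /= conjCi hs conjC_nat.
set s := sqrtC 3 in h3 hs *; set i := 'i in hi *.
have -> : ((-1 + i * s) / 2) ^+ 2 = (1 - 2 * i * s + i^+2 * s^+2) / 4 by field.
by rewrite hi h3; field.
Qed.
Lemma wcert (C : numClosedFieldType) (x y q : C) :
  x - y = (omega C ^+ 2 + omega C + 1) * q -> x = y.
Proof. by rewrite w2 mul0r => /eqP; rewrite subr_eq0 => /eqP. Qed.

Lemma wcertg (C : numClosedFieldType) (w x y q : C) : w ^+ 2 + w + 1 = 0 ->
  x - y = (w ^+ 2 + w + 1) * q -> x = y.
Proof. by move=> ->; rewrite mul0r => /eqP; rewrite subr_eq0 => /eqP. Qed.

Definition o30 : 'I_3 := @Ordinal 3 0 isT.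
Definition o31 : 'I_3 := @Ordinal 3 1 isT.
Definition o32 : 'I_3 := @Ordinal 3 2 isT.
Definition ordn (i : 'I_3) : 'I_3 := match val i with 0 => o30 | 1 => o31 | _ => o32 end.
Lemma ordnE i : ordn i = i.
Proof. by apply: val_inj; case: i => [[|[|[|i]]] Hi]. Qed.
Lemma det3 (R : comRingType) (A : 'M[R]_3) : \det A =
  A o30 o30 * A o31 o31 * A o32 o32 + A o30 o31 * A o31 o32 * A o32 o30
  + A o30 o32 * A o31 o30 * A o32 o31 - A o30 o32 * A o31 o31 * A o32 o30
  - A o30 o31 * A o31 o30 * A o32 o32 - A o30 o30 * A o31 o32 * A o32 o31.
Proof.
have -> : A = \matrix_(i, j) A (ordn i) (ordn j).
  by apply/matrixP => i j; rewrite mxE !ordnE.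
rewrite (expand_det_row _ ord0) !big_ord_recr big_ord0 /= add0r /cofactor.
rewrite !(expand_det_row _ ord0) !big_ord_recr !big_ord0 /= !add0r /cofactor.
rewrite !det_mx11 !mxE /=.
rewrite !expr0 !expr1 !mulN1r !mul1r /=; ring.
Qed.

Definition sh (a : 'I_3) : 'I_3 :=
  match nat_of_ord a with 0 => o32 | 1 => o30 | _ => o31 end.

Definition psiv (C : numClosedFieldType) : 'cV[C]_3 :=
  \col_(i < 3) (if (i : nat) == 1%N then 1 else if (i : nat) == 2%N then -1 else 0).

Lemma sum3 (C : numClosedFieldType) (f : 'I_3 -> C) : \sum_i f i =
  f o30 + f o31 + f o32.
Proof. rewrite !big_ord_recr big_ord0 /= add0r.
 by repeat (congr (_ + _)); congr f; apply: val_inj. Qed.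

Lemma Zop_mul (C : numClosedFieldType) (v : 'cV[C]_3) :
  Zop C *m v = \col_a (omega C ^+ a * v a 0).
Proof.
apply/matrixP => a j; rewrite !mxE sum3 !mxE (ord1 j).
case: a => [[|[|[|a]]] Ha] //=; rewrite !mul0r ?add0r ?addr0; by congr (_ * v _ _); apply: val_inj.
Qed.

Lemma Zpow_mul (C : numClosedFieldType) k (v : 'cV[C]_3) :
  Zop C ^+ k *m v = \col_a ((omega C ^+ a) ^+ k * v a 0).
Proof.
elim: k => [|k IH].
  by rewrite expr0 mul1mx; apply/matrixP => a j; rewrite mxE expr0 mul1r (ord1 j).
rewrite exprS -mulmxE -mulmxA IH Zop_mul; apply/matrixP => a j.
by rewrite !mxE exprS mulrA.
Qed.

Lemma Xop_mul (C : numClosedFieldType) (v : 'cV[C]_3) :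
  Xop C *m v = \col_a (v (sh a) 0).
Proof.
apply/matrixP => a j; rewrite !mxE sum3 !mxE (ord1 j).
case: a => [[|[|[|a]]] Ha] //=; rewrite !mul0r ?mul1r ?add0r ?addr0 //.
Qed.

Lemma Xpow_mul (C : numClosedFieldType) m (v : 'cV[C]_3) :
  Xop C ^+ m *m v = \col_a (v (iter m sh a) 0).
Proof.
elim: m => [|m IH].
  by rewrite expr0 mul1mx; apply/matrixP => a j; rewrite mxE (ord1 j).
rewrite exprS -mulmxE -mulmxA IH Xop_mul; apply/matrixP => a j.
by rewrite !mxE iterSr.
Qed.

Definition dv3 (i : nat) : nat :=
  match i with 0 | 1 | 2 => 0 | 3 | 4 | 5 => 1 | _ => 2 end.
Definition md3 (i : nat) : nat :=
  match i with 0 | 3 | 6 => 0 | 1 | 4 | 7 => 1 | _ => 2 end.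
Lemma dv3E (i : 'I_9) : (i %/ 3 = dv3 i)%N.
Proof. by case: i => [[|[|[|[|[|[|[|[|[|i]]]]]]]]] Hi]. Qed.
Lemma md3E (i : 'I_9) : (i %% 3 = md3 i)%N.
Proof. by case: i => [[|[|[|[|[|[|[|[|[|i]]]]]]]]] Hi]. Qed.

Definition hv (C : numClosedFieldType) (i : 'I_9) (a : 'I_3) : C :=
  (omega C ^+ (iter (dv3 i) sh a)) ^+ (md3 i) * psiv C (iter (dv3 i) sh a) 0.

Lemma sicvec_e (C : numClosedFieldType) i :
  sicvec C i = (sqrtC 2)^-1 *: \col_a hv C i a.
Proof.
rewrite /sicvec dv3E md3E (_ : psi0 C = (sqrtC 2)^-1 *: psiv C) // -!scalemxAr.
rewrite -mulmxA Zpow_mul Xpow_mul; congr (_ *: _); apply/matrixP => a j; rewrite !mxE; by rewrite /hv mxE.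
Qed.

Lemma Pi_e (C : numClosedFieldType) i a b :
  Pi C i a b = 2^-1 * (hv C i a * (hv C i b)^*).
Proof.
rewrite /Pi sicvec_e /adj !mxE big_ord1 !mxE.
have hs : ((sqrtC (2:C))^-1)^* = (sqrtC 2)^-1.
  by apply/CrealP; apply/ger0_real; rewrite invr_ge0 sqrtC_ge0 ler0n.
rewrite rmorphM /= hs.
have h2 : (sqrtC (2:C))^-1 * (sqrtC 2)^-1 = 2^-1 by rewrite -invfM -expr2 sqrtCK.
by rewrite -h2; ring.
Qed.

Definition cvec {C : numClosedFieldType} (r : C) (n : 'I_9 -> C) (i : 'I_9) : C := 4 * prob r n i - 3^-1.
Arguments cvec : simpl never.

Lemma rho_e (C : numClosedFieldType) (r : C) n a b :
  rho r n a b = \sum_i cvec r n i * (2^-1 * (hv C i a * (hv C i b)^*)).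
Proof.
rewrite /rho summxE; apply: eq_bigr => i _; by rewrite mxE Pi_e.
Qed.

Definition o90 : 'I_9 := @Ordinal 9 0 isT.
Definition o91 : 'I_9 := @Ordinal 9 1 isT.
Definition o92 : 'I_9 := @Ordinal 9 2 isT.
Definition o93 : 'I_9 := @Ordinal 9 3 isT.
Definition o94 : 'I_9 := @Ordinal 9 4 isT.
Definition o95 : 'I_9 := @Ordinal 9 5 isT.
Definition o96 : 'I_9 := @Ordinal 9 6 isT.
Definition o97 : 'I_9 := @Ordinal 9 7 isT.
Definition o98 : 'I_9 := @Ordinal 9 8 isT.

Lemma sum9 (C : numClosedFieldType) (f : 'I_9 -> C) : \sum_i f i =
  f o90 + f o91 + f o92 + f o93 + f o94 + f o95 + f o96 + f o97 + f o98.
Proof. rewrite !big_ord_recr big_ord0 /= add0r.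
 by repeat (congr (_ + _)); congr f; apply: val_inj. Qed.

Definition Qe00 {C : numClosedFieldType} (w c0 c1 c2 c3 c4 c5 c6 c7 c8 : C) : C := (- (1/2)*c8 - (1/2)*c7 - (1/2)*c5 - (1/2)*c4 + (1/2)*w*c8 + (1/2)*w*c7 + (1/2)*w*c5 + (1/2)*w*c4 - (1/2)*w^+3*c8 - (1/2)*w^+3*c5 - (1/2)*w^+3*c4 + (1/2)*w^+4*c8 + (1/2)*w^+4*c5 + (1/2)*w^+4*c4 - (1/2)*w^+6*c5 + (1/2)*w^+7*c5 - (1/2)*w^+9*c5 + (1/2)*w^+10*c5).
Definition Qe01 {C : numClosedFieldType} (w c0 c1 c2 c3 c4 c5 c6 c7 c8 : C) : C := ((1/2)*w*c8 - (1/2)*w^+2*c8 + (1/2)*w^+2*c7 - (1/2)*w^+3*c7 + (1/2)*w^+4*c8 - (1/2)*w^+5*c8 + (1/2)*w^+7*c8 - (1/2)*w^+8*c8).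
Definition Qe02 {C : numClosedFieldType} (w c0 c1 c2 c3 c4 c5 c6 c7 c8 : C) : C := ((1/2)*w*c4 + (1/2)*w^+2*c5 - (1/2)*w^+2*c4 - (1/2)*w^+3*c5 + (1/2)*w^+5*c5 - (1/2)*w^+6*c5).
Definition Qe10 {C : numClosedFieldType} (w c0 c1 c2 c3 c4 c5 c6 c7 c8 : C) : C := ((1/2)*w*c7 + (1/2)*w^+2*c8 - (1/2)*w^+2*c7 - (1/2)*w^+3*c8 + (1/2)*w^+5*c8 - (1/2)*w^+6*c8).
Definition Qe11 {C : numClosedFieldType} (w c0 c1 c2 c3 c4 c5 c6 c7 c8 : C) : C := (- (1/2)*c8 - (1/2)*c7 - (1/2)*c2 - (1/2)*c1 + (1/2)*w*c8 + (1/2)*w*c7 + (1/2)*w*c2 + (1/2)*w*c1 - (1/2)*w^+3*c8 - (1/2)*w^+3*c7 - (1/2)*w^+3*c2 + (1/2)*w^+4*c8 + (1/2)*w^+4*c7 + (1/2)*w^+4*c2 - (1/2)*w^+6*c8 + (1/2)*w^+7*c8 - (1/2)*w^+9*c8 + (1/2)*w^+10*c8).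
Definition Qe12 {C : numClosedFieldType} (w c0 c1 c2 c3 c4 c5 c6 c7 c8 : C) : C := ((1/2)*w*c2 - (1/2)*w^+2*c2 + (1/2)*w^+2*c1 - (1/2)*w^+3*c1 + (1/2)*w^+4*c2 - (1/2)*w^+5*c2 + (1/2)*w^+7*c2 - (1/2)*w^+8*c2).
Definition Qe20 {C : numClosedFieldType} (w c0 c1 c2 c3 c4 c5 c6 c7 c8 : C) : C := ((1/2)*w*c5 - (1/2)*w^+2*c5 + (1/2)*w^+2*c4 - (1/2)*w^+3*c4 + (1/2)*w^+4*c5 - (1/2)*w^+5*c5 + (1/2)*w^+7*c5 - (1/2)*w^+8*c5).
Definition Qe21 {C : numClosedFieldType} (w c0 c1 c2 c3 c4 c5 c6 c7 c8 : C) : C := ((1/2)*w*c1 + (1/2)*w^+2*c2 - (1/2)*w^+2*c1 - (1/2)*w^+3*c2 + (1/2)*w^+5*c2 - (1/2)*w^+6*c2).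
Definition Qe22 {C : numClosedFieldType} (w c0 c1 c2 c3 c4 c5 c6 c7 c8 : C) : C := (- (1/2)*c5 - (1/2)*c4 - (1/2)*c2 - (1/2)*c1 + (1/2)*w*c5 + (1/2)*w*c4 + (1/2)*w*c2 + (1/2)*w*c1 - (1/2)*w^+3*c5 - (1/2)*w^+3*c2 - (1/2)*w^+3*c1 + (1/2)*w^+4*c5 + (1/2)*w^+4*c2 + (1/2)*w^+4*c1 - (1/2)*w^+6*c2 + (1/2)*w^+7*c2 - (1/2)*w^+9*c2 + (1/2)*w^+10*c2).
Definition Qa00 {C : numClosedFieldType} (w c0 c1 c2 c3 c4 c5 c6 c7 c8 : C) : C := 0.
Definition Qa01 {C : numClosedFieldType} (w c0 c1 c2 c3 c4 c5 c6 c7 c8 : C) : C := ((1/2)*w*c8 - (1/2)*w^+2*c8).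
Definition Qa02 {C : numClosedFieldType} (w c0 c1 c2 c3 c4 c5 c6 c7 c8 : C) : C := ((1/2)*w*c4 - (1/2)*w^+2*c4).
Definition Qa10 {C : numClosedFieldType} (w c0 c1 c2 c3 c4 c5 c6 c7 c8 : C) : C := ((1/2)*w*c7 - (1/2)*w^+2*c7).
Definition Qa11 {C : numClosedFieldType} (w c0 c1 c2 c3 c4 c5 c6 c7 c8 : C) : C := 0.
Definition Qa12 {C : numClosedFieldType} (w c0 c1 c2 c3 c4 c5 c6 c7 c8 : C) : C := ((1/2)*w*c2 - (1/2)*w^+2*c2).
Definition Qa20 {C : numClosedFieldType} (w c0 c1 c2 c3 c4 c5 c6 c7 c8 : C) : C := ((1/2)*w*c5 - (1/2)*w^+2*c5).
Definition Qa21 {C : numClosedFieldType} (w c0 c1 c2 c3 c4 c5 c6 c7 c8 : C) : C := ((1/2)*w*c1 - (1/2)*w^+2*c1).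
Definition Qa22 {C : numClosedFieldType} (w c0 c1 c2 c3 c4 c5 c6 c7 c8 : C) : C := 0.

Definition Ef {C : numClosedFieldType} (w c0 c1 c2 c3 c4 c5 c6 c7 c8 : C) (a b : nat) : C :=
 match a, b with
 | 0, 0 => 2^-1 * (c3+c4+c5+c6+c7+c8)
 | 1, 1 => 2^-1 * (c0+c1+c2+c6+c7+c8)
 | 2, 2 => 2^-1 * (c0+c1+c2+c3+c4+c5)
 | 1, 2 => -2^-1 * (c0 + c1*w^+2 + c2*w)
 | 2, 1 => -2^-1 * (c0 + c1*w + c2*w^+2)
 | 2, 0 => -2^-1 * (c3 + c4*w^+2 + c5*w)
 | 0, 2 => -2^-1 * (c3 + c4*w + c5*w^+2)
 | 0, 1 => -2^-1 * (c6 + c7*w^+2 + c8*w)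
 | 1, 0 => -2^-1 * (c6 + c7*w + c8*w^+2)
 | _, _ => 0 end.

Definition Emx {C : numClosedFieldType} (r : C) (n : 'I_9 -> C) : 'M[C]_3 :=
  \matrix_(a < 3, b < 3) Ef (omega C) (cvec r n o90) (cvec r n o91) (cvec r n o92)
     (cvec r n o93) (cvec r n o94) (cvec r n o95) (cvec r n o96) (cvec r n o97) (cvec r n o98) a b.

Lemma rho_Emx (C : numClosedFieldType) (r : C) n : rho r n = Emx r n.
Proof.
apply/matrixP => a b; rewrite rho_e sum9 /hv /Emx mxE.
move: (cvec r n o90) (cvec r n o91) (cvec r n o92) (cvec r n o93) (cvec r n o94)
  (cvec r n o95) (cvec r n o96) (cvec r n o97) (cvec r n o98) => c0 c1 c2 c3 c4 c5 c6 c7 c8.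
have hw := w2 C; have hcw := cw C; move: (omega C) hw hcw => w hw hcw.
case: a => [[|[|[|a]]] Ha] //; case: b => [[|[|[|b]]] Hb] //; rewrite /= !mxE /=;
  rewrite !rmorphM /= !rmorphN /= !rmorphXn /= ?rmorph1 ?rmorph0 !hcw.
- apply: (@wcertg _ w _ _ (Qe00 w c0 c1 c2 c3 c4 c5 c6 c7 c8) hw); rewrite /Qe00; by field.
- apply: (@wcertg _ w _ _ (Qe01 w c0 c1 c2 c3 c4 c5 c6 c7 c8) hw); rewrite /Qe01; by field.
- apply: (@wcertg _ w _ _ (Qe02 w c0 c1 c2 c3 c4 c5 c6 c7 c8) hw); rewrite /Qe02; by field.
- apply: (@wcertg _ w _ _ (Qe10 w c0 c1 c2 c3 c4 c5 c6 c7 c8) hw); rewrite /Qe10; by field.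
- apply: (@wcertg _ w _ _ (Qe11 w c0 c1 c2 c3 c4 c5 c6 c7 c8) hw); rewrite /Qe11; by field.
- apply: (@wcertg _ w _ _ (Qe12 w c0 c1 c2 c3 c4 c5 c6 c7 c8) hw); rewrite /Qe12; by field.
- apply: (@wcertg _ w _ _ (Qe20 w c0 c1 c2 c3 c4 c5 c6 c7 c8) hw); rewrite /Qe20; by field.
- apply: (@wcertg _ w _ _ (Qe21 w c0 c1 c2 c3 c4 c5 c6 c7 c8) hw); rewrite /Qe21; by field.
- apply: (@wcertg _ w _ _ (Qe22 w c0 c1 c2 c3 c4 c5 c6 c7 c8) hw); rewrite /Qe22; by field.
Qed.

Definition Qtr {C : numClosedFieldType} (w r x0 x1 x2 x3 x4 x5 x6 x7 : C) : C := (1/54 + (4/9)*r*x6 + (4/9)*r*x3 + (4/9)*r*x0 - 24*r^+2*x7^+2 - 24*r^+2*x6*x7 - 16*r^+2*x6^+2 - 24*r^+2*x5*x7 - 24*r^+2*x5*x6 - 16*r^+2*x5^+2 - 24*r^+2*x4*x7 - 24*r^+2*x4*x6 - 8*r^+2*x4*x5 - 16*r^+2*x4^+2 - 24*r^+2*x3*x7 - 24*r^+2*x3*x6 - 8*r^+2*x3*x5 - 8*r^+2*x3*x4 - 8*r^+2*x3^+2 - 24*r^+2*x2*x7 - 24*r^+2*x2*x6 - 16*r^+2*x2*x5 - 16*r^+2*x2*x4 - 16*r^+2*x2*x3 - 16*r^+2*x2^+2 - 24*r^+2*x1*x7 - 24*r^+2*x1*x6 - 16*r^+2*x1*x5 -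 16*r^+2*x1*x4 - 16*r^+2*x1*x3 - 8*r^+2*x1*x2 - 16*r^+2*x1^+2 - 24*r^+2*x0*x7 - 24*r^+2*x0*x6 - 16*r^+2*x0*x5 - 16*r^+2*x0*x4 - 16*r^+2*x0*x3 - 8*r^+2*x0*x2 - 8*r^+2*x0*x1 - 8*r^+2*x0^+2 + (1/54)*w - (2/9)*w*r*x6 - (2/9)*w*r*x3 - (2/9)*w*r*x0 + 24*w*r^+2*x7^+2 + 24*w*r^+2*x6*x7 + 8*w*r^+2*x6^+2 + 24*w*r^+2*x5*x7 + 16*w*r^+2*x5*x6 + 16*w*r^+2*x5^+2 + 24*w*r^+2*x4*x7 + 16*w*r^+2*x4*x6 + 8*w*r^+2*x4*x5 + 16*w*r^+2*x4^+2 + 24*w*r^+2*x3*x7 + 16*w*r^+2*x3*x6 + 16*w*r^+2*x3*x5 + 16*w*r^+2*x3*x4 + 8*w*r^+2*x3^+2 + 24*w*r^+2*x2*x7 + 16*w*r^+2*x2*x6 + 16*w*r^+2*x2*x5 + 16*w*r^+2*x2*x4 + 16*w*r^+2*x2*x3 + 16*w*r^+2*x2^+2 + 24*w*r^+2*x1*x7 + 16*w*r^+2*x1*x6 + 16*w*r^+2*x1*x5 + 16*w*r^+2*x1*x4 + 16*w*r^+2*x1*x3 + 8*w*r^+2*x1*x2 + 16*w*r^+2*x1^+2 + 24*w*r^+2*x0*x7 + 16*w*r^+2*x0*x6 + 16*w*r^+2*x0*x5 + 16*w*r^+2*x0*x4 + 16*w*r^+2*x0*x3 + 16*w*r^+2*x0*x2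 + 16*w*r^+2*x0*x1 + 8*w*r^+2*x0^+2 + (1/54)*w^+2 - (2/9)*w^+2*r*x6 - (2/9)*w^+2*r*x3 - (2/9)*w^+2*r*x0 - 8*w^+2*r^+2*x7^+2 - 8*w^+2*r^+2*x6*x7 - 8*w^+2*r^+2*x5*x7 - 8*w^+2*r^+2*x4*x7 + 8*w^+2*r^+2*x4*x5 - 8*w^+2*r^+2*x3*x7 - 8*w^+2*r^+2*x2*x7 - 8*w^+2*r^+2*x1*x7 + 8*w^+2*r^+2*x1*x2 - 8*w^+2*r^+2*x0*x7).
Definition Qdet {C : numClosedFieldType} (w r x0 x1 x2 x3 x4 x5 x6 x7 : C) : C := (- 5/1458 - (7/81)*r*x6 - (7/81)*r*x3 - (7/81)*r*x0 + 4*r^+2*x7^+2 + 4*r^+2*x6*x7 + (8/3)*r^+2*x6^+2 + 4*r^+2*x5*x7 + (32/9)*r^+2*x5*x6 + (8/3)*r^+2*x5^+2 + 4*r^+2*x4*x7 + (32/9)*r^+2*x4*x6 + (4/3)*r^+2*x4*x5 + (8/3)*r^+2*x4^+2 + 4*r^+2*x3*x7 + (28/9)*r^+2*x3*x6 + (16/9)*r^+2*x3*x5 + (16/9)*r^+2*x3*x4 + (16/9)*r^+2*x3^+2 + 4*r^+2*x2*x7 + (32/9)*r^+2*x2*x6 + (8/3)*r^+2*x2*x5 + (8/3)*r^+2*x2*x4 + (8/3)*r^+2*x2*x3 + (8/3)*r^+2*x2^+2 + 4*r^+2*x1*x7 + (32/9)*r^+2*x1*x6 + (8/3)*r^+2*x1*x5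 + (8/3)*r^+2*x1*x4 + (8/3)*r^+2*x1*x3 + (4/3)*r^+2*x1*x2 + (8/3)*r^+2*x1^+2 + 4*r^+2*x0*x7 + (28/9)*r^+2*x0*x6 + (8/3)*r^+2*x0*x5 + (8/3)*r^+2*x0*x4 + (20/9)*r^+2*x0*x3 + (16/9)*r^+2*x0*x2 + (16/9)*r^+2*x0*x1 + (16/9)*r^+2*x0^+2 + 24*r^+3*x5*x7^+2 + 24*r^+3*x5*x6*x7 + 16*r^+3*x5*x6^+2 + 24*r^+3*x5^+2*x7 + 24*r^+3*x5^+2*x6 + 24*r^+3*x4*x7^+2 + 24*r^+3*x4*x6*x7 + 16*r^+3*x4*x6^+2 + 48*r^+3*x4*x5*x7 + 48*r^+3*x4*x5*x6 + 24*r^+3*x4*x5^+2 + 24*r^+3*x4^+2*x7 + 24*r^+3*x4^+2*x6 + 24*r^+3*x4^+2*x5 + 24*r^+3*x3*x7^+2 + 24*r^+3*x3*x6*x7 + 16*r^+3*x3*x6^+2 + 48*r^+3*x3*x5*x7 + 48*r^+3*x3*x5*x6 + 24*r^+3*x3*x5^+2 + 48*r^+3*x3*x4*x7 + 48*r^+3*x3*x4*x6 + 72*r^+3*x3*x4*x5 + 24*r^+3*x3*x4^+2 + 24*r^+3*x3^+2*x7 + 24*r^+3*x3^+2*x6 + 32*r^+3*x3^+2*x5 + 32*r^+3*x3^+2*x4 + 8*r^+3*x3^+3 + 24*r^+3*x2*x7^+2 + 24*r^+3*x2*x6*x7 + 16*r^+3*x2*x6^+2 + 24*r^+3*x2*x5*x7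 + 24*r^+3*x2*x5*x6 + 8*r^+3*x2*x5^+2 + 48*r^+3*x2*x4*x7 + 72*r^+3*x2*x4*x6 + 40*r^+3*x2*x4*x5 + 32*r^+3*x2*x4^+2 + 72*r^+3*x2*x3*x7 + 48*r^+3*x2*x3*x6 + 40*r^+3*x2*x3*x5 + 64*r^+3*x2*x3*x4 + 32*r^+3*x2*x3^+2 + 24*r^+3*x2^+2*x7 + 24*r^+3*x2^+2*x6 + 8*r^+3*x2^+2*x5 + 32*r^+3*x2^+2*x4 + 32*r^+3*x2^+2*x3 + 24*r^+3*x1*x7^+2 + 24*r^+3*x1*x6*x7 + 16*r^+3*x1*x6^+2 + 48*r^+3*x1*x5*x7 + 72*r^+3*x1*x5*x6 + 32*r^+3*x1*x5^+2 + 72*r^+3*x1*x4*x7 + 48*r^+3*x1*x4*x6 + 64*r^+3*x1*x4*x5 + 32*r^+3*x1*x4^+2 + 24*r^+3*x1*x3*x7 + 24*r^+3*x1*x3*x6 + 40*r^+3*x1*x3*x5 + 40*r^+3*x1*x3*x4 + 8*r^+3*x1*x3^+2 + 48*r^+3*x1*x2*x7 + 48*r^+3*x1*x2*x6 + 40*r^+3*x1*x2*x5 + 64*r^+3*x1*x2*x4 + 40*r^+3*x1*x2*x3 + 24*r^+3*x1*x2^+2 + 24*r^+3*x1^+2*x7 + 24*r^+3*x1^+2*x6 + 32*r^+3*x1^+2*x5 + 32*r^+3*x1^+2*x4 + 8*r^+3*x1^+2*x3 + 24*r^+3*x1^+2*x2 + 24*r^+3*x0*x7^+2 + 24*r^+3*x0*x6*x7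 + 16*r^+3*x0*x6^+2 + 72*r^+3*x0*x5*x7 + 48*r^+3*x0*x5*x6 + 32*r^+3*x0*x5^+2 + 24*r^+3*x0*x4*x7 + 24*r^+3*x0*x4*x6 + 40*r^+3*x0*x4*x5 + 8*r^+3*x0*x4^+2 + 48*r^+3*x0*x3*x7 + 56*r^+3*x0*x3*x6 + 64*r^+3*x0*x3*x5 + 40*r^+3*x0*x3*x4 + 32*r^+3*x0*x3^+2 + 48*r^+3*x0*x2*x7 + 48*r^+3*x0*x2*x6 + 40*r^+3*x0*x2*x5 + 40*r^+3*x0*x2*x4 + 64*r^+3*x0*x2*x3 + 24*r^+3*x0*x2^+2 + 48*r^+3*x0*x1*x7 + 48*r^+3*x0*x1*x6 + 64*r^+3*x0*x1*x5 + 40*r^+3*x0*x1*x4 + 40*r^+3*x0*x1*x3 + 72*r^+3*x0*x1*x2 + 24*r^+3*x0*x1^+2 + 24*r^+3*x0^+2*x7 + 24*r^+3*x0^+2*x6 + 32*r^+3*x0^+2*x5 + 8*r^+3*x0^+2*x4 + 32*r^+3*x0^+2*x3 + 32*r^+3*x0^+2*x2 + 32*r^+3*x0^+2*x1 + 8*r^+3*x0^+3 - (11/2916)*w + (5/162)*w*r*x6 + (5/162)*w*r*x3 + (5/162)*w*r*x0 - 4*w*r^+2*x7^+2 - 4*w*r^+2*x6*x7 - (4/3)*w*r^+2*x6^+2 - 4*w*r^+2*x5*x7 - (8/3)*w*r^+2*x5*x6 - (20/9)*w*r^+2*x5^+2 - 4*w*r^+2*x4*x7 - (8/3)*w*r^+2*x4*x6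 - (4/9)*w*r^+2*x4*x5 - (20/9)*w*r^+2*x4^+2 - 4*w*r^+2*x3*x7 - (20/9)*w*r^+2*x3*x6 - (16/9)*w*r^+2*x3*x5 - (16/9)*w*r^+2*x3*x4 - (8/9)*w*r^+2*x3^+2 - 4*w*r^+2*x2*x7 - (8/3)*w*r^+2*x2*x6 - (20/9)*w*r^+2*x2*x5 - (20/9)*w*r^+2*x2*x4 - (20/9)*w*r^+2*x2*x3 - (20/9)*w*r^+2*x2^+2 - 4*w*r^+2*x1*x7 - (8/3)*w*r^+2*x1*x6 - (20/9)*w*r^+2*x1*x5 - (20/9)*w*r^+2*x1*x4 - (20/9)*w*r^+2*x1*x3 - (4/9)*w*r^+2*x1*x2 - (20/9)*w*r^+2*x1^+2 - 4*w*r^+2*x0*x7 - (20/9)*w*r^+2*x0*x6 - (20/9)*w*r^+2*x0*x5 - (20/9)*w*r^+2*x0*x4 - (16/9)*w*r^+2*x0*x3 - (16/9)*w*r^+2*x0*x2 - (16/9)*w*r^+2*x0*x1 - (8/9)*w*r^+2*x0^+2 - 24*w*r^+3*x5*x7^+2 - 24*w*r^+3*x5*x6*x7 - 8*w*r^+3*x5*x6^+2 - 24*w*r^+3*x5^+2*x7 - 16*w*r^+3*x5^+2*x6 - 24*w*r^+3*x4*x7^+2 - 24*w*r^+3*x4*x6*x7 - 8*w*r^+3*x4*x6^+2 - 48*w*r^+3*x4*x5*x7 - 32*w*r^+3*x4*x5*x6 - 24*w*r^+3*x4*x5^+2 - 24*w*r^+3*x4^+2*x7 - 16*w*r^+3*x4^+2*x6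 - 24*w*r^+3*x4^+2*x5 - 24*w*r^+3*x3*x7^+2 - 24*w*r^+3*x3*x6*x7 - 8*w*r^+3*x3*x6^+2 - 48*w*r^+3*x3*x5*x7 - 32*w*r^+3*x3*x5*x6 - 16*w*r^+3*x3*x5^+2 - 48*w*r^+3*x3*x4*x7 - 32*w*r^+3*x3*x4*x6 - 56*w*r^+3*x3*x4*x5 - 16*w*r^+3*x3*x4^+2 - 24*w*r^+3*x3^+2*x7 - 16*w*r^+3*x3^+2*x6 - 24*w*r^+3*x3^+2*x5 - 24*w*r^+3*x3^+2*x4 - 8*w*r^+3*x3^+3 - 24*w*r^+3*x2*x7^+2 - 24*w*r^+3*x2*x6*x7 - 8*w*r^+3*x2*x6^+2 - 24*w*r^+3*x2*x5*x7 - 8*w*r^+3*x2*x5*x6 - 8*w*r^+3*x2*x5^+2 - 48*w*r^+3*x2*x4*x7 - 56*w*r^+3*x2*x4*x6 - 40*w*r^+3*x2*x4*x5 - 32*w*r^+3*x2*x4^+2 - 72*w*r^+3*x2*x3*x7 - 40*w*r^+3*x2*x3*x6 - 40*w*r^+3*x2*x3*x5 - 64*w*r^+3*x2*x3*x4 - 32*w*r^+3*x2*x3^+2 - 24*w*r^+3*x2^+2*x7 - 16*w*r^+3*x2^+2*x6 - 8*w*r^+3*x2^+2*x5 - 32*w*r^+3*x2^+2*x4 - 32*w*r^+3*x2^+2*x3 - 24*w*r^+3*x1*x7^+2 - 24*w*r^+3*x1*x6*x7 - 8*w*r^+3*x1*x6^+2 - 48*w*r^+3*x1*x5*x7 - 56*w*r^+3*x1*x5*x6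 - 32*w*r^+3*x1*x5^+2 - 72*w*r^+3*x1*x4*x7 - 32*w*r^+3*x1*x4*x6 - 64*w*r^+3*x1*x4*x5 - 32*w*r^+3*x1*x4^+2 - 24*w*r^+3*x1*x3*x7 - 16*w*r^+3*x1*x3*x6 - 40*w*r^+3*x1*x3*x5 - 40*w*r^+3*x1*x3*x4 - 8*w*r^+3*x1*x3^+2 - 48*w*r^+3*x1*x2*x7 - 32*w*r^+3*x1*x2*x6 - 40*w*r^+3*x1*x2*x5 - 64*w*r^+3*x1*x2*x4 - 40*w*r^+3*x1*x2*x3 - 24*w*r^+3*x1*x2^+2 - 24*w*r^+3*x1^+2*x7 - 16*w*r^+3*x1^+2*x6 - 32*w*r^+3*x1^+2*x5 - 32*w*r^+3*x1^+2*x4 - 8*w*r^+3*x1^+2*x3 - 24*w*r^+3*x1^+2*x2 - 24*w*r^+3*x0*x7^+2 - 24*w*r^+3*x0*x6*x7 - 8*w*r^+3*x0*x6^+2 - 72*w*r^+3*x0*x5*x7 - 40*w*r^+3*x0*x5*x6 - 32*w*r^+3*x0*x5^+2 - 24*w*r^+3*x0*x4*x7 - 16*w*r^+3*x0*x4*x6 - 40*w*r^+3*x0*x4*x5 - 8*w*r^+3*x0*x4^+2 - 48*w*r^+3*x0*x3*x7 - 32*w*r^+3*x0*x3*x6 - 56*w*r^+3*x0*x3*x5 - 32*w*r^+3*x0*x3*x4 - 24*w*r^+3*x0*x3^+2 - 48*w*r^+3*x0*x2*x7 - 32*w*r^+3*x0*x2*x6 - 40*w*r^+3*x0*x2*x5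 - 40*w*r^+3*x0*x2*x4 - 56*w*r^+3*x0*x2*x3 - 16*w*r^+3*x0*x2^+2 - 48*w*r^+3*x0*x1*x7 - 32*w*r^+3*x0*x1*x6 - 64*w*r^+3*x0*x1*x5 - 40*w*r^+3*x0*x1*x4 - 32*w*r^+3*x0*x1*x3 - 56*w*r^+3*x0*x1*x2 - 16*w*r^+3*x0*x1^+2 - 24*w*r^+3*x0^+2*x7 - 16*w*r^+3*x0^+2*x6 - 32*w*r^+3*x0^+2*x5 - 8*w*r^+3*x0^+2*x4 - 24*w*r^+3*x0^+2*x3 - 24*w*r^+3*x0^+2*x2 - 24*w*r^+3*x0^+2*x1 - 8*w*r^+3*x0^+3 - (1/243)*w^+2 + (1/27)*w^+2*r*x6 + (1/27)*w^+2*r*x3 + (1/27)*w^+2*r*x0 + (4/3)*w^+2*r^+2*x7^+2 + (4/3)*w^+2*r^+2*x6*x7 + (14/9)*w^+2*r^+2*x5*x7 + (2/9)*w^+2*r^+2*x5*x6 + (2/3)*w^+2*r^+2*x5^+2 + (10/9)*w^+2*r^+2*x4*x7 - (2/9)*w^+2*r^+2*x4*x5 + (4/9)*w^+2*r^+2*x4^+2 + (4/3)*w^+2*r^+2*x3*x7 + (4/9)*w^+2*r^+2*x3*x6 + (10/9)*w^+2*r^+2*x3*x5 + (8/9)*w^+2*r^+2*x3*x4 + (4/9)*w^+2*r^+2*x3^+2 + (14/9)*w^+2*r^+2*x2*x7 + (2/9)*w^+2*r^+2*x2*x6 + (2/3)*w^+2*r^+2*x2*x5 + (2/3)*w^+2*r^+2*x2*x4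 + (2/3)*w^+2*r^+2*x2*x3 + (2/3)*w^+2*r^+2*x2^+2 + (10/9)*w^+2*r^+2*x1*x7 + (2/3)*w^+2*r^+2*x1*x5 + (2/9)*w^+2*r^+2*x1*x4 + (4/9)*w^+2*r^+2*x1*x3 - (2/9)*w^+2*r^+2*x1*x2 + (4/9)*w^+2*r^+2*x1^+2 + (4/3)*w^+2*r^+2*x0*x7 + (4/9)*w^+2*r^+2*x0*x6 + (2/3)*w^+2*r^+2*x0*x5 + (4/9)*w^+2*r^+2*x0*x4 + (8/9)*w^+2*r^+2*x0*x3 + (10/9)*w^+2*r^+2*x0*x2 + (8/9)*w^+2*r^+2*x0*x1 + (4/9)*w^+2*r^+2*x0^+2 + 8*w^+2*r^+3*x5*x7^+2 + 8*w^+2*r^+3*x5*x6*x7 + 8*w^+2*r^+3*x5^+2*x7 + 8*w^+2*r^+3*x4*x7^+2 + 8*w^+2*r^+3*x4*x6*x7 + 16*w^+2*r^+3*x4*x5*x7 + 8*w^+2*r^+3*x4*x5^+2 + 8*w^+2*r^+3*x4^+2*x7 + 8*w^+2*r^+3*x4^+2*x5 + 8*w^+2*r^+3*x3*x7^+2 + 8*w^+2*r^+3*x3*x6*x7 + 16*w^+2*r^+3*x3*x5*x7 + 16*w^+2*r^+3*x3*x4*x7 + 8*w^+2*r^+3*x3*x4*x5 + 8*w^+2*r^+3*x3^+2*x7 + 8*w^+2*r^+3*x2*x7^+2 + 8*w^+2*r^+3*x2*x6*x7 + 16*w^+2*r^+3*x2*x5*x7 - 8*w^+2*r^+3*x2*x5*x6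 + 16*w^+2*r^+3*x2*x4*x7 + 24*w^+2*r^+3*x2*x3*x7 + 8*w^+2*r^+3*x2*x3*x6 + 8*w^+2*r^+3*x2*x3*x5 + 8*w^+2*r^+3*x2*x3*x4 + 8*w^+2*r^+3*x2*x3^+2 + 8*w^+2*r^+3*x2^+2*x7 + 8*w^+2*r^+3*x2^+2*x3 + 8*w^+2*r^+3*x1*x7^+2 + 8*w^+2*r^+3*x1*x6*x7 + 16*w^+2*r^+3*x1*x5*x7 + 16*w^+2*r^+3*x1*x4*x7 - 8*w^+2*r^+3*x1*x4*x6 + 8*w^+2*r^+3*x1*x3*x7 + 16*w^+2*r^+3*x1*x2*x7 + 8*w^+2*r^+3*x1*x2*x3 + 8*w^+2*r^+3*x1*x2^+2 + 8*w^+2*r^+3*x1^+2*x7 + 8*w^+2*r^+3*x1^+2*x2 + 8*w^+2*r^+3*x0*x7^+2 + 8*w^+2*r^+3*x0*x6*x7 + 24*w^+2*r^+3*x0*x5*x7 + 8*w^+2*r^+3*x0*x5*x6 + 8*w^+2*r^+3*x0*x5^+2 + 8*w^+2*r^+3*x0*x4*x7 + 8*w^+2*r^+3*x0*x4*x5 + 16*w^+2*r^+3*x0*x3*x7 + 8*w^+2*r^+3*x0*x3*x5 + 16*w^+2*r^+3*x0*x2*x7 + 8*w^+2*r^+3*x0*x2*x5 + 8*w^+2*r^+3*x0*x2*x3 + 16*w^+2*r^+3*x0*x1*x7 + 8*w^+2*r^+3*x0*x1*x5 + 8*w^+2*r^+3*x0*x1*x2 + 8*w^+2*r^+3*x0^+2*x7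 + 8*w^+2*r^+3*x0^+2*x5 - (1/1458)*w^+3 + (1/81)*w^+3*r*x6 + (1/81)*w^+3*r*x3 + (1/81)*w^+3*r*x0 - (4/9)*w^+3*r^+2*x5*x7 + (4/9)*w^+3*r^+2*x4*x7 + (4/9)*w^+3*r^+2*x4*x6 + (4/9)*w^+3*r^+2*x4*x5 + (4/9)*w^+3*r^+2*x4^+2 + (4/9)*w^+3*r^+2*x3*x4 - (4/9)*w^+3*r^+2*x2*x7 + (4/9)*w^+3*r^+2*x1*x7 + (4/9)*w^+3*r^+2*x1*x6 + (8/9)*w^+3*r^+2*x1*x4 + (4/9)*w^+3*r^+2*x1*x3 + (4/9)*w^+3*r^+2*x1*x2 + (4/9)*w^+3*r^+2*x1^+2 + (4/9)*w^+3*r^+2*x0*x4 + (4/9)*w^+3*r^+2*x0*x1 - 16*w^+3*r^+3*x2*x5*x7 - 8*w^+3*r^+3*x2*x5*x6 - 8*w^+3*r^+3*x2*x5^+2 + 8*w^+3*r^+3*x2*x4*x6 + 8*w^+3*r^+3*x2*x4^+2 - 8*w^+3*r^+3*x2*x3*x5 + 8*w^+3*r^+3*x2*x3*x4 - 8*w^+3*r^+3*x2^+2*x5 + 8*w^+3*r^+3*x2^+2*x4 + 8*w^+3*r^+3*x1*x5*x6 + 8*w^+3*r^+3*x1*x5^+2 + 16*w^+3*r^+3*x1*x4*x7 + 8*w^+3*r^+3*x1*x4*x6 + 16*w^+3*r^+3*x1*x4*x5 + 8*w^+3*r^+3*x1*x4^+2 + 8*w^+3*r^+3*x1*x3*x5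 + 8*w^+3*r^+3*x1*x3*x4 + 16*w^+3*r^+3*x1*x2*x4 + 8*w^+3*r^+3*x1^+2*x5 + 8*w^+3*r^+3*x1^+2*x4 - 8*w^+3*r^+3*x0*x2*x5 + 8*w^+3*r^+3*x0*x2*x4 + 8*w^+3*r^+3*x0*x1*x5 + 8*w^+3*r^+3*x0*x1*x4 - (1/2916)*w^+4 + (1/162)*w^+4*r*x6 + (1/162)*w^+4*r*x3 + (1/162)*w^+4*r*x0 + (2/9)*w^+4*r^+2*x5*x7 + (2/9)*w^+4*r^+2*x5*x6 + (2/9)*w^+4*r^+2*x5^+2 - (2/9)*w^+4*r^+2*x4*x7 + (2/9)*w^+4*r^+2*x4*x5 + (2/9)*w^+4*r^+2*x3*x5 + (2/9)*w^+4*r^+2*x2*x7 + (2/9)*w^+4*r^+2*x2*x6 + (2/9)*w^+4*r^+2*x2*x5 + (2/9)*w^+4*r^+2*x2*x4 + (2/9)*w^+4*r^+2*x2*x3 + (2/9)*w^+4*r^+2*x2^+2 - (2/9)*w^+4*r^+2*x1*x7 + (2/9)*w^+4*r^+2*x1*x5 - (2/9)*w^+4*r^+2*x1*x4 + (2/9)*w^+4*r^+2*x1*x2 + (2/9)*w^+4*r^+2*x0*x5 + (2/9)*w^+4*r^+2*x0*x2 + 8*w^+4*r^+3*x2*x5*x7 + 8*w^+4*r^+3*x2*x5*x6 + 8*w^+4*r^+3*x2*x5^+2 + 8*w^+4*r^+3*x2*x4*x5 + 8*w^+4*r^+3*x2*x3*x5 + 8*w^+4*r^+3*x2^+2*x5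 - 8*w^+4*r^+3*x1*x4*x7 + 8*w^+4*r^+3*x1*x2*x5 + 8*w^+4*r^+3*x0*x2*x5).

Definition Fx {C : numClosedFieldType} (x0 x1 x2 x3 x4 x5 x6 x7 x8 : C) : C :=
  x0^+3 + x1^+3 + x2^+3 + x3^+3 + x4^+3 + x5^+3 + x6^+3 + x7^+3 + x8^+3 - 3 * (x0*x1*x2 + x3*x4*x5 + x6*x7*x8 + x0*x3*x6 + x1*x4*x7 + x2*x5*x8 + x0*x4*x8 + x1*x5*x6 + x2*x3*x7 + x0*x5*x7 + x1*x3*x8 + x2*x4*x6).

Lemma e8 (C : numClosedFieldType) (x0 x1 x2 x3 x4 x5 x6 x7 x8 : C) : x0 + x1 + x2 + x3 + x4 + x5 + x6 + x7 + x8 = 0 -> x8 = -(x0 + x1 + x2 + x3 + x4 + x5 + x6 + x7).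
Proof. move=> hs; have e : x8 = x0 + x1 + x2 + x3 + x4 + x5 + x6 + x7 + x8 - (x0 + x1 + x2 + x3 + x4 + x5 + x6 + x7) by ring. by rewrite hs sub0r in e. Qed.

Lemma Emx_tr2 (C : numClosedFieldType) (r : C) n : \sum_i n i = 0 ->
  \tr (Emx r n *m Emx r n) = 3^-1 + 12 * r^+2 * (\sum_i n i ^+ 2).
Proof.
move=> hs; rewrite /mxtrace sum3 !mxE !sum3 !mxE /=.
rewrite sum9 in hs; rewrite sum9 /cvec /prob.
have hw := w2 C; move: (omega C) hw => w hw.
move: (n o90) (n o91) (n o92) (n o93) (n o94) (n o95) (n o96) (n o97) (n o98) hs => x0 x1 x2 x3 x4 x5 x6 x7 x8 /e8 ->.
apply: (@wcertg _ w _ _ (Qtr w r x0 x1 x2 x3 x4 x5 x6 x7) hw); rewrite /Qtr; by field.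
Qed.

Lemma Emx_det (C : numClosedFieldType) (r : C) n : \sum_i n i = 0 ->
  \det (Emx r n) = 8 * r^+3 * Fx (n o90) (n o91) (n o92) (n o93) (n o94) (n o95) (n o96) (n o97) (n o98) - 2 * r^+2 * (\sum_i n i ^+ 2) + 27^-1.
Proof.
move=> hs; rewrite det3 !mxE /=.
rewrite sum9 in hs; rewrite sum9 /cvec /prob /Fx.
have hw := w2 C; move: (omega C) hw => w hw.
move: (n o90) (n o91) (n o92) (n o93) (n o94) (n o95) (n o96) (n o97) (n o98) hs => x0 x1 x2 x3 x4 x5 x6 x7 x8 /e8 ->.
apply: (@wcertg _ w _ _ (Qdet w r x0 x1 x2 x3 x4 x5 x6 x7) hw); rewrite /Qdet; by field.
Qed.

Lemma Fcub_e (C : numClosedFieldType) (n : 'I_9 -> C) :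
  Fcub n = Fx (n o90) (n o91) (n o92) (n o93) (n o94) (n o95) (n o96) (n o97) (n o98).
Proof.
rewrite /Fcub !sum9 /inQ /=.
rewrite /Fx; by field.
Qed.

Lemma Emx_tr (C : numClosedFieldType) (r : C) n : \sum_i n i = 0 -> \tr (Emx r n) = 1.
Proof.
move=> hs; rewrite /mxtrace sum3 !mxE /=.
rewrite sum9 in hs; rewrite /cvec /prob.
move: (n o90) (n o91) (n o92) (n o93) (n o94) (n o95) (n o96) (n o97) (n o98) hs => x0 x1 x2 x3 x4 x5 x6 x7 x8 /e8 ->.
by field.
Qed.

Lemma cvec_real (C : numClosedFieldType) (r : C) n i : r \is Num.real ->
  (forall i, n i \is Num.real) -> (cvec r n i)^* = cvec r n i.
Proof.
move=> hr hn; apply/CrealP; rewrite /cvec /prob.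
by rewrite ?(realB, realM, realD, realV, hn, real1, realn, hr).
Qed.

Lemma Emx_adj (C : numClosedFieldType) (r : C) n : r \is Num.real ->
  (forall i, n i \is Num.real) -> adj (Emx r n) = Emx r n.
Proof.
move=> hr hn; apply/matrixP => a b; rewrite /adj /Emx !mxE.
have hc := fun i => @cvec_real C r n i hr hn.
move: (hc o90) (hc o91) (hc o92) (hc o93) (hc o94) (hc o95) (hc o96) (hc o97) (hc o98).
move: (cvec r n o90) (cvec r n o91) (cvec r n o92) (cvec r n o93) (cvec r n o94)
  (cvec r n o95) (cvec r n o96) (cvec r n o97) (cvec r n o98) => c0 c1 c2 c3 c4 c5 c6 c7 c8 h0 h1 h2 h3 h4 h5 h6 h7 h8.
have hw := w2 C; have hcw := cw C; move: (omega C) hw hcw => w hw hcw.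
have hh : (2^-1 : C)^* = 2^-1 by rewrite fmorphV /= conjC_nat.
case: a => [[|[|[|a]]] Ha] //; case: b => [[|[|[|b]]] Hb] //=;
  rewrite ?rmorphM /= ?rmorphN /= ?rmorphD /= ?rmorphXn /= ?hh ?hcw ?h0 ?h1 ?h2 ?h3 ?h4 ?h5 ?h6 ?h7 ?h8;
  rewrite ?rmorphM /= ?rmorphN /= ?rmorphD /= ?rmorphXn /= ?hh ?hcw ?h0 ?h1 ?h2 ?h3 ?h4 ?h5 ?h6 ?h7 ?h8.
- apply: (@wcertg _ w _ _ (Qa00 w c0 c1 c2 c3 c4 c5 c6 c7 c8) hw); rewrite /Qa00; by field.
- apply: (@wcertg _ w _ _ (Qa01 w c0 c1 c2 c3 c4 c5 c6 c7 c8) hw); rewrite /Qa01; by field.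
- apply: (@wcertg _ w _ _ (Qa02 w c0 c1 c2 c3 c4 c5 c6 c7 c8) hw); rewrite /Qa02; by field.
- apply: (@wcertg _ w _ _ (Qa10 w c0 c1 c2 c3 c4 c5 c6 c7 c8) hw); rewrite /Qa10; by field.
- apply: (@wcertg _ w _ _ (Qa11 w c0 c1 c2 c3 c4 c5 c6 c7 c8) hw); rewrite /Qa11; by field.
- apply: (@wcertg _ w _ _ (Qa12 w c0 c1 c2 c3 c4 c5 c6 c7 c8) hw); rewrite /Qa12; by field.
- apply: (@wcertg _ w _ _ (Qa20 w c0 c1 c2 c3 c4 c5 c6 c7 c8) hw); rewrite /Qa20; by field.
- apply: (@wcertg _ w _ _ (Qa21 w c0 c1 c2 c3 c4 c5 c6 c7 c8) hw); rewrite /Qa21; by field.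
- apply: (@wcertg _ w _ _ (Qa22 w c0 c1 c2 c3 c4 c5 c6 c7 c8) hw); rewrite /Qa22; by field.
Qed.

Lemma adjM (C : numClosedFieldType) m k p (X : 'M[C]_(m, k)) (Y : 'M[C]_(k, p)) :
  adj (X *m Y) = adj Y *m adj X.
Proof. by rewrite /adj trmx_mul map_mxM. Qed.

Lemma adjK (C : numClosedFieldType) m k (X : 'M[C]_(m, k)) : adj (adj X) = X.
Proof. by apply/matrixP => i j; rewrite !mxE conjCK. Qed.

Lemma spec3 (C : numClosedFieldType) (A : 'M[C]_3) : adj A = A ->
  exists (P : 'M[C]_3) (d : 'rV[C]_3),
   [/\ P *m adj P = 1%:M, adj P *m P = 1%:M, A = adj P *m diag_mx d *m P &
       forall k, d 0 k \is Num.real].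
Proof.
move=> hA.
have hH : A \is hermsymmx.
  by apply/is_hermitianmxP; rewrite expr0 scale1r; rewrite -[LHS]hA.
have hN := hermitian_normalmx hH.
have hU := spectral_unitarymx A.
have hP := unitarymx_unit hU.
exists (spectralmx A), (spectral_diag A); split.
- exact/unitarymxP.
- by rewrite -[adj _](invmx_unitary hU) mulVmx.
- by rewrite {1}(orthomx_spectralP hN) (invmx_unitary hU).
- by move=> k; apply: (mxOverP (hermitian_spectral_diag_real hH)).
Qed.

Lemma prod3 (C : numClosedFieldType) (f : 'I_3 -> C) : \prod_i f i =
  f o30 * f o31 * f o32.
Proof. rewrite !big_ord_recr big_ord0 /= mul1r.
 by repeat (congr (_ * _)); congr f; apply: val_inj. Qed.

Section Sp.
Variable C : numClosedFieldType.
Variables (P : 'M[C]_3) (d : 'rV[C]_3).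
Hypothesis hPP : P *m adj P = 1%:M.
Hypothesis hPP' : adj P *m P = 1%:M.

Let A := adj P *m diag_mx d *m P.

Lemma sp_tr : \tr A = d 0 o30 + d 0 o31 + d 0 o32.
Proof.
by rewrite /A mxtrace_mulC mulmxA hPP mul1mx mxtrace_diag sum3.
Qed.

Lemma sp_sq : A *m A = adj P *m diag_mx (\row_j (d 0 j * d 0 j)) *m P.
Proof.
rewrite /A -!mulmxA; congr (_ *m _).
by rewrite !mulmxA -(mulmxA _ P) hPP mulmx1 mulmx_diag.
Qed.

Lemma sp_tr2 : \tr (A *m A) = d 0 o30 ^+ 2 + d 0 o31 ^+ 2 + d 0 o32 ^+ 2.
Proof.
rewrite sp_sq mxtrace_mulC mulmxA hPP mul1mx mxtrace_diag sum3 !mxE.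
by rewrite !expr2.
Qed.

Lemma sp_det : \det A = d 0 o30 * d 0 o31 * d 0 o32.
Proof.
rewrite /A !det_mulmx mulrC mulrA -det_mulmx hPP det1 mul1r det_diag.
by rewrite prod3.
Qed.

Lemma sp_quad (v : 'cV[C]_3) :
  (adj v *m A *m v) 0 0 = \sum_k (d 0 k * ((P *m v) k 0)^* * (P *m v) k 0).
Proof.
rewrite /A -!mulmxA !mulmxA -adjM.
set u := P *m v.
rewrite -mulmxA mxE; apply: eq_bigr => k _.
rewrite mul_mx_diag !mxE /u; ring.
Qed.

Lemma sp_psd : psd A <-> forall k, 0 <= d 0 k.
Proof.
split => [h k | h v].
- have := h (adj P *m \col_j (j == k)%:R).
  rewrite sp_quad mulmxA hPP mul1mx (bigD1 k) //= big1 => [|j hj].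
    by rewrite !mxE eqxx conjC1 !mulr1 addr0.
  by rewrite !mxE (negbTE hj) conjC0 !mulr0.
- rewrite sp_quad; apply: sumr_ge0 => k _.
  by rewrite -mulrA mulr_ge0 // mulrC -normCK exprn_ge0.
Qed.

End Sp.
Arguments sp_tr {C P d}.
Arguments sp_sq {C P d}.
Arguments sp_tr2 {C P d}.
Arguments sp_det {C P d}.
Arguments sp_psd {C P d}.

Lemma real3_ge0 {C : numClosedFieldType} {a b c : C} :
  a \is Num.real -> b \is Num.real -> c \is Num.real -> a + b + c = 1 ->
  0 <= a * b + b * c + c * a -> 0 <= a * b * c -> 0 <= a.
Proof.
move=> ra rb rc hs he hp.
rewrite real_leNgt ?real0 //; apply/negP => ha.
have hbc : b * c <= 0 by rewrite -(nmulr_rge0 _ ha) mulrA.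
have h1 : 0 < 1 - a by rewrite subr_gt0 (lt_trans ha) ?ltr01.
have h2 : a * (1 - a) < 0 by rewrite nmulr_rlt0.
have e : a * b + b * c + c * a = a * (1 - a) + b * c by rewrite -hs; ring.
have := ltr_leD h2 hbc; rewrite addr0 -e => h3.
by have := le_lt_trans he h3; rewrite ltxx.
Qed.

Lemma real3_iff {C : numClosedFieldType} {a b c : C} :
  a \is Num.real -> b \is Num.real -> c \is Num.real -> a + b + c = 1 ->
  (0 <= a /\ 0 <= b /\ 0 <= c) <-> (0 <= a * b + b * c + c * a /\ 0 <= a * b * c).
Proof.
move=> ra rb rc hs; split.
- case=> ha [hb hc]; split.
    by rewrite !addr_ge0 ?mulr_ge0.
  by rewrite !mulr_ge0.
- case=> he hp; split; first by have := real3_ge0 ra rb rc hs he hp.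
  split.
  + apply: (real3_ge0 rb rc ra); first by rewrite -hs; ring.
      by rewrite (_ : _ + _ + _ = a * b + b * c + c * a) //; ring.
    by rewrite (_ : _ * _ * _ = a * b * c) //; ring.
  + apply: (real3_ge0 rc ra rb); first by rewrite -hs; ring.
      by rewrite (_ : _ + _ + _ = a * b + b * c + c * a) //; ring.
    by rewrite (_ : _ * _ * _ = a * b * c) //; ring.
Qed.

Lemma real3_idem {C : numClosedFieldType} {a b c : C} :
  0 <= a -> 0 <= b -> 0 <= c -> a + b + c = 1 -> a ^+ 2 + b ^+ 2 + c ^+ 2 = 1 ->
  [/\ a * a = a, b * b = b & c * c = c].
Proof.
move=> ha hb hc hs hs2.
have la : 0 <= a * (1 - a).
  by rewrite mulr_ge0 // (_ : 1 - a = b + c) ?addr_ge0 // -hs; ring.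
have lb : 0 <= b * (1 - b).
  by rewrite mulr_ge0 // (_ : 1 - b = a + c) ?addr_ge0 // -hs; ring.
have lc : 0 <= c * (1 - c).
  by rewrite mulr_ge0 // (_ : 1 - c = a + b) ?addr_ge0 // -hs; ring.
have e : a * (1 - a) + b * (1 - b) + c * (1 - c) = 0.
  by rewrite (_ : _ + _ + _ = (a + b + c) - (a^+2 + b^+2 + c^+2)); [rewrite hs hs2 subrr | ring].
move/eqP: e; rewrite paddr_eq0 ?addr_ge0 // paddr_eq0 // => /andP[/andP[/eqP ea /eqP eb] /eqP ec].
split; apply/eqP; rewrite -subr_eq0 -[X in X == _]opprK oppr_eq0.
- by rewrite -ea; apply/eqP; ring.
- by rewrite -eb; apply/eqP; ring.
- by rewrite -ec; apply/eqP; ring.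
Qed.


Lemma eig0 (C : numClosedFieldType) (A : 'M[C]_3) : eigenvalue A 0 <-> \det A = 0.
Proof.
split => [/eigenvalueP [v hv hv0] | h].
- by apply/eqP/det0P; exists v => //; rewrite hv scale0r.
- apply/eigenvalueP; have /det0P [v hv0 hv] := (introT eqP h).
  by exists v => //; rewrite hv scale0r.
Qed.

Theorem mainTheorem7 (C : numClosedFieldType) (n : 'I_9 -> C) (r : C)
  (hreal : forall i, n i \is Num.real)
  (hsum : \sum_i n i = 0) (hsq : \sum_i n i ^+ 2 = 1) (hr : 0 <= r) :
  (density (rho r n) <->
     r ^+ 2 <= 18^-1 /\ 0 <= 4 * r ^+ 3 * Fcub n - r ^+ 2 + 54^-1) /\
  ((density (rho r n) /\ eigenvalue (rho r n) 0) <->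
     r ^+ 2 <= 18^-1 /\ 4 * r ^+ 3 * Fcub n - r ^+ 2 + 54^-1 = 0) /\
  (pure (rho r n) <-> r ^+ 2 = 18^-1 /\ Fcub n = (sqrtC 2)^-1).
Proof.
have rr : r \is Num.real := ger0_real hr.
have hA : adj (rho r n) = rho r n by rewrite rho_Emx Emx_adj.
have htr : \tr (rho r n) = 1 by rewrite rho_Emx Emx_tr.
have htr2 : \tr (rho r n *m rho r n) = 3^-1 + 12 * r^+2.
  by rewrite rho_Emx Emx_tr2 // hsq mulr1.
have hdet : \det (rho r n) = 2 * (4 * r ^+ 3 * Fcub n - r ^+ 2 + 54^-1).
  by rewrite rho_Emx Emx_det // hsq Fcub_e; field.
rewrite /pure.
move: (rho r n) hA htr htr2 hdet => A hA htr htr2 hdet.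
move: (Fcub n) hdet => F hdet.
set G := 4 * r ^+ 3 * F - r ^+ 2 + 54^-1 in hdet *.
have [P [d [hPP hPP' hAd hdr]]] := @spec3 C A hA.
have s1 : d 0 o30 + d 0 o31 + d 0 o32 = 1 by rewrite -htr hAd (sp_tr hPP).
have s2 : d 0 o30 ^+ 2 + d 0 o31 ^+ 2 + d 0 o32 ^+ 2 = 3^-1 + 12 * r^+2.
  by rewrite -htr2 hAd (sp_tr2 hPP).
have s3 : d 0 o30 * d 0 o31 * d 0 o32 = 2 * G by rewrite -hdet hAd (sp_det hPP).
have hpsd : psd A <-> (0 <= d 0 o30 /\ 0 <= d 0 o31 /\ 0 <= d 0 o32).
  rewrite hAd (sp_psd hPP); split => [h | [h0 [h1 h2]] k]; first by rewrite !h.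
  by case: k => [[|[|[|k]]] Hk] //; [move: h0 | move: h1 | move: h2];
     congr (_ <= d 0 _); apply: val_inj.
have he2 : d 0 o30 * d 0 o31 + d 0 o31 * d 0 o32 + d 0 o32 * d 0 o30
           = 6 * (18^-1 - r ^+ 2).
  have -> : d 0 o30 * d 0 o31 + d 0 o31 * d 0 o32 + d 0 o32 * d 0 o30 =
    ((d 0 o30 + d 0 o31 + d 0 o32) ^+ 2 - (d 0 o30 ^+ 2 + d 0 o31 ^+ 2 + d 0 o32 ^+ 2)) / 2.
    by field.
  by rewrite s1 s2; field.
have hdens : density A <-> (r ^+ 2 <= 18^-1 /\ 0 <= G).
  rewrite /density; transitivity (psd A).
    by split => [[_ [h _]] // | h]; split => //; split.
  rewrite hpsd (real3_iff (hdr o30) (hdr o31) (hdr o32) s1) he2 s3.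
  by rewrite !pmulr_rge0 ?ltr0n // subr_ge0.
have hdet0 : \det A = 0 <-> G = 0.
  by rewrite hdet; split => [/eqP | ->]; [rewrite mulf_eq0 pnatr_eq0 /= => /eqP | rewrite mulr0].
split; first exact: hdens.
split.
  rewrite eig0 hdet0 hdens; split => [[[h _] hG] // | [h hG]]; split => //.
  by split => //; rewrite hG.
have r0 : r ^+ 2 = 18^-1 -> r != 0.
  by move=> h; apply/eqP => r0; move: h; rewrite r0 expr0n /= => /eqP; rewrite eq_sym invr_eq0 pnatr_eq0.
have hs6 : r ^+ 2 = 18^-1 -> sqrtC 2 = 6 * r.
  move=> h; rewrite -{1}(sqrCK (x := 6 * r)); last by rewrite mulr_ge0 ?ler0n.
  by congr sqrtC; rewrite exprMn h; field.
split.
- move=> [hd hAA].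
  have hr2 : r ^+ 2 = 18^-1.
    have : 3^-1 + 12 * r^+2 = 1 by rewrite -htr2 hAA htr.
    move=> h; apply/eqP; rewrite -subr_eq0.
    rewrite (_ : r^+2 - 18^-1 = (3^-1 + 12 * r^+2 - 1) / 12); last by field.
    by rewrite h subrr mul0r.
  have hG : G = 0.
    apply/hdet0.
    have : \det A * \det A = \det A by rewrite -det_mulmx hAA.
    move/eqP; rewrite -subr_eq0 -{3}(mulr1 (\det A)) -mulrBr mulf_eq0 subr_eq0.
    case/orP => /eqP // h1.
    have hU : A \in unitmx by rewrite unitmxE h1 unitr1.
    have hA1 : A = 1%:M.
      by rewrite -(mulmxK hU A) hAA mulmxV.
    by move: htr; rewrite hA1 mxtrace1 => /eqP; rewrite (eqr_nat C 3 1).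
  split => //.
  rewrite hs6 //.
  have e3 : r ^+ 3 = r * r ^+ 2 by rewrite exprS.
  have h1 : 4 * r ^+ 3 * F = 27^-1.
    apply/eqP; rewrite -subr_eq0.
    rewrite (_ : 4 * r ^+ 3 * F - 27^-1 = G + (r ^+ 2 - 18^-1)); last by rewrite /G; field.
    by rewrite hG hr2 subrr addr0.
  have h2 : 6 * r * F = 1.
    rewrite (_ : 6 * r * F = 27 * (4 * r ^+ 3 * F)); first by rewrite h1; field.
    by rewrite e3 hr2; field.
  have n6 : 6 * r != 0 by rewrite mulf_eq0 pnatr_eq0 /= (negbTE (r0 hr2)).
  apply: (mulfI n6); by rewrite h2 divff.
- move=> [hr2 hF].
  have n6 : r != 0 := r0 hr2.
  have hG : G = 0.
    rewrite /G hF hs6 // (_ : 4 * r ^+ 3 * (6 * r)^-1 = 4 / 6 * r ^+ 2); last by field.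
    by rewrite hr2; field.
  have hD : density A by apply/hdens; rewrite hr2 hG lexx.
  split => //.
  have [h0 [h1 h2]] : (0 <= d 0 o30 /\ 0 <= d 0 o31 /\ 0 <= d 0 o32).
    by apply/hpsd; case: hD => _ [].
  have s2' : d 0 o30 ^+ 2 + d 0 o31 ^+ 2 + d 0 o32 ^+ 2 = 1 by rewrite s2 hr2; field.
  have [e0 e1 e2] := real3_idem h0 h1 h2 s1 s2'.
  rewrite hAd (sp_sq hPP); congr (_ *m diag_mx _ *m _); apply/rowP => j; rewrite !mxE.
  case: j => [[|[|[|j]]] Hj] //=.
  + by rewrite (_ : Ordinal Hj = o30) ?e0 //; apply: val_inj.
  + by rewrite (_ : Ordinal Hj = o31) ?e1 //; apply: val_inj.
  + by rewrite (_ : Ordinal Hj = o32) ?e2 //; apply: val_inj.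
Qed.
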